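(* For any $\delta>0$ there exists a fair allocation instance with additive valuations and positive entitlements summing to $1$ in which some agent $a_i$ satisfies $\frac{\mathsf{APS}_i}{\mathsf{WMMS}_i}<\delta$.
   Context: A fair allocation instance consists of agents $a_1,\dots,a_n$, a finite set $M$ of $m$ indivisible goods, valuations $v_i:2^M\to\mathbb{R}_{\ge0}$, and entitlements $b_1,\dots,b_n>0$. A valuation is additive if $v(S)=\sum_{g\in S}v(\{g\})$. Let $\Pi_n$ be the set of partitions $(S_1,\dots,S_n)$ of $M$ into $n$ bundles. The weighted maximin share is $\mathsf{WMMS}_i=\max_{S\in\Pi_n}\min_{j\in[n]}v_i(S_j)\frac{b_i}{b_j}$. With $\mathcal{P}=\{p\in\mathbb{R}^m_{\ge0}:\sum_g p_g=1\}$ and $p(S)=\sum_{g\in S}p_g$, the AnyPrice share is $\mathsf{APS}_i=\min_{p\in\mathcal{P}}\max_{S\subseteq M,\ p(S)\le b_i}v_i(S)$. *)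

(* Defs.v *)
From HB Require Import structures.
From mathcomp Require Import all_boot all_order all_algebra.
From mathcomp Require Import all_classical all_reals.
Set Implicit Arguments. Unset Strict Implicit. Unset Printing Implicit Defensive.
Import Order.TTheory GRing.Theory Num.Theory.
Local Open Scope ring_scope.

Section FairDivision.
Variable R : realType.

Definition addval (m : nat) (v : 'I_m -> R) (S : {set 'I_m}) : R :=
  \sum_(g in S) v g.

Definition is_price (m : nat) (p : 'I_m -> R) : Prop :=
  (forall g, 0 <= p g) /\ \sum_(g < m) p g = 1.

(* Instance with n.+1 agents, m goods.  val i g = v_i({g}), b = entitlements. *)
(* Partitions of M into n.+1 bundles are given by assignments A : goods -> agents,
   bundle j = [set g | A g == j]. *)
Definition bundle (n m : nat) (A : {ffun 'I_m -> 'I_n.+1}) (j : 'I_n.+1) : {set 'I_m} :=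
  [set g | A g == j].

Definition WMMS (n m : nat) (val : 'I_n.+1 -> 'I_m -> R) (b : 'I_n.+1 -> R)
  (i : 'I_n.+1) : R :=
  \big[Num.max/0]_(A : {ffun 'I_m -> 'I_n.+1})
    (let F := fun j => addval (val i) (bundle A j) * (b i / b j) in
     \big[Num.min/F ord0]_(j < n.+1) F j).

Definition APS (n m : nat) (val : 'I_n.+1 -> 'I_m -> R) (b : 'I_n.+1 -> R)
  (i : 'I_n.+1) : R :=
  inf [set x : R | exists p : 'I_m -> R, is_price p /\
        x = \big[Num.max/0]_(S : {set 'I_m} | \sum_(g in S) p g <= b i)
              addval (val i) S].

End FairDivision.

(* Main.v *)
Require Import Defs.
From HB Require Import structures.
From mathcomp Require Import all_boot all_order all_algebra.
From mathcomp Require Import all_classical all_reals.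
From mathcomp Require Import lra.
Import Order.TTheory GRing.Theory Num.Theory.
Local Open Scope ring_scope.

Theorem proposition1 (R : realType) (delta : R) (hdelta : 0 < delta) :
  exists (n m : nat) (val : 'I_n.+1 -> 'I_m -> R) (b : 'I_n.+1 -> R),
    (forall i g, 0 <= val i g) /\
    (forall i, 0 < b i) /\ \sum_(i < n.+1) b i = 1 /\
    exists i : 'I_n.+1,
      0 < WMMS val b i /\ APS val b i / WMMS val b i < delta.
Proof.
pose b : 'I_2 -> R := fun i => if i == ord0 then 1/3 else 2/3.
have bpos : forall i, 0 < b i by move=> i; rewrite /b; case: ifP => _; lra.
exists 1%N, 2%N, (fun _ _ => 1), b.
split; first by move=> *; exact: ler01.
split; first exact: bpos.
split; first by rewrite big_ord_recr big_ord1 /b /=; lra.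
exists ord0.
have addvalE : forall S, addval (fun _ : 'I_2 => (1:R)) S = #|S|%:R.
  by move=> S; rewrite /addval sumr_const.
have Wpos : 0 < WMMS (fun (_ : 'I_2) (_ : 'I_2) => (1:R)) b ord0.
  rewrite /WMMS.
  apply: lt_le_trans; last exact: (le_bigmax _ _ [ffun g : 'I_2 => g]).
  rewrite /=.
  apply: lt_bigmin => [|j _]; rewrite addvalE;
  have -> : forall j, bundle [ffun g : 'I_2 => g] j = [set j] by
    move=> k; apply/setP => g; rewrite !inE ffunE.
  - by rewrite cards1 mul1r divff ?ltr01 // gt_eqF // bpos.
  - by rewrite cards1 mul1r divr_gt0 // bpos.
have Aneg : APS (fun (_ : 'I_2) (_ : 'I_2) => (1:R)) b ord0 <= 0.
  rewrite /APS.
  match goal with |- context[inf ?X] => set E := X end.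
  have E0 : E 0.
    exists (fun _ => 1/2); split.
      split; first by move=> _; lra.
      by rewrite big_ord_recr big_ord1 /=; lra.
    apply/eqP; rewrite eq_le; apply/andP; split.
      elim/big_ind: _ => // [x y hx hy|S _]; first by rewrite le_max hx.
      by rewrite addvalE ler0n.
    apply: bigmax_le => // S.
    rewrite sumr_const addvalE /b /=.
    case: #|S| => // k h.
    have hk : forall c : R, c *+ k = c * k%:R by move=> c; rewrite mulr_natr.
    rewrite mulrSr hk in h.
    rewrite -[k.+1]addn1 natrD.
    have t : (1 + 1).+1%:R = 3 :> R by [].
    rewrite t in h.
    have : (0:R) <= k%:R by exact: ler0n.
    lra.
  have hl : has_lbound E.
    exists 0 => y [p [_ ->]].
    by elim/big_ind: _ => // [x z hx hz|S _]; rewrite ?le_max ?hx // addvalE ler0n.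
  exact: (ge_inf hl E0).
split => //.
rewrite ltr_pdivrMr //.
apply: (le_lt_trans Aneg); exact: mulr_gt0.
Qed.
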